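(* In the setting described in the context, let $\{x_k\}_{k\geq 0}$ be the random iterates generated by UCDC$(x_0)$. Then for every $k$, $$\mathbf{E}[F(x_{k+1})-F^*\mid x_k]\leq \frac{1}{n}\big(H(x_k,T(x_k))-F^*\big)+\frac{n-1}{n}\big(F(x_k)-F^*\big).$$
   Context: Let $U\in\mathbf{R}^{N\times N}$ be a column permutation of the $N\times N$ identity matrix, partitioned as $U=[U_1,\dots,U_n]$ with $U_i\in\mathbf{R}^{N\times N_i}$, $\sum_i N_i=N$. For $x\in\mathbf{R}^N$ write $x^{(i)}=U_i^Tx\in\mathbf{R}^{N_i}$, so $x=\sum_i U_ix^{(i)}$. Each $\mathbf{R}^{N_i}$ carries the norm $\|t\|_{(i)}=\langle B_it,t\rangle^{1/2}$ and dual norm $\|t\|_{(i)}^*=\langle B_i^{-1}t,t\rangle^{1/2}$, where $B_i$ is positive definite. Consider minimizing $F(x)=f(x)+\Psi(x)$ over $\mathbf{R}^N$, where $f$ is convex and differentiable with block-coordinate Lipschitz gradient: there are constants $L_1,\dots,L_n>0$ with $\|\nabla_if(x+U_it)-\nabla_if(x)\|_{(i)}^*\leq L_i\|t\|_{(i)}$ for all $x\in\mathbf{R}^N$, $t\in\mathbf{R}^{N_i}$, $i$, where $\nabla_if(x)=U_i^T\nabla f(x)$; and $\Psi(x)=\sum_{i=1}^n\Psi_i(x^{(i)})$ with each $\Psi_i$ a proper closed convex extended-real-valued function. The problem is assumed to have a minimizer; $F^*$ is the optimal value. Let $L=\mathrm{Diag}(L_1,\dots,L_n)$ and $\|x\|_L=(\sum_i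 L_i\|x^{(i)}\|_{(i)}^2)^{1/2}$. Define $V_i(x,t)=\langle\nabla_if(x),t\rangle+\frac{L_i}{2}\|t\|_{(i)}^2+\Psi_i(x^{(i)}+t)$, $T^{(i)}(x)=\arg\min_{t\in\mathbf{R}^{N_i}}V_i(x,t)$, $T(x)=\sum_iU_iT^{(i)}(x)\in\mathbf{R}^N$, and $H(x,T)=f(x)+\langle\nabla f(x),T\rangle+\frac12\|T\|_L^2+\Psi(x+T)$. Algorithm UCDC$(x_0)$: for $k=0,1,2,\dots$, choose $i_k=i\in\{1,\dots,n\}$ uniformly at random (probability $1/n$ each, independently of the past) and set $x_{k+1}=x_k+U_iT^{(i)}(x_k)$. *)

(* Defs.v *)
From HB Require Import structures.
From mathcomp Require Import all_boot all_order all_algebra.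
From mathcomp Require Import all_classical all_reals.
From mathcomp Require Import ereal topology normedtype derive.
Unset Printing Implicit Defensive.
Import Order.TTheory GRing.Theory Num.Theory.
Import numFieldNormedType.Exports.
Local Open Scope classical_set_scope.
Local Open Scope ring_scope.

Definition vdot {R : realType} {m : nat} (a b : 'cV[R]_m) : R := (a^T *m b) 0 0.

Definition posdef {R : realType} {m : nat} (B : 'M[R]_m) : Prop :=
  B^T = B /\ forall t : 'cV[R]_m, t != 0 -> 0 < vdot (B *m t) t.

Definition bnorm {R : realType} {m : nat} (B : 'M[R]_m) (t : 'cV[R]_m) : R :=
  Num.sqrt (vdot (B *m t) t).
Definition bdnorm {R : realType} {m : nat} (B : 'M[R]_m) (t : 'cV[R]_m) : R :=
  Num.sqrt (vdot (invmx B *m t) t).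

Definition grad {R : realType} {N : nat} (f : 'cV[R]_N -> R) (x : 'cV[R]_N)
  : 'cV[R]_N := \col_j ('D_(delta_mx j 0) f x).

Definition convex_fun {R : realType} {N : nat} (f : 'cV[R]_N -> R) : Prop :=
  forall (x y : 'cV[R]_N) (a : R), 0 <= a <= 1 ->
    f (a *: x + (1 - a) *: y) <= a * f x + (1 - a) * f y.

Definition proper_efun {R : realType} {m : nat} (g : 'cV[R]_m -> \bar R) : Prop :=
  (forall t, g t != -oo%E) /\ (exists t, g t != +oo%E).

Definition closed_efun {R : realType} {m : nat} (g : 'cV[R]_m -> \bar R) : Prop :=
  forall (t : 'cV[R]_m) (a : R), (a%:E < g t)%E ->
    \forall s \near t, (a%:E < g s)%E.

Definition convex_efun {R : realType} {m : nat} (g : 'cV[R]_m -> \bar R) : Prop :=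
  forall (x y : 'cV[R]_m) (a : R), 0 <= a <= 1 ->
    (g (a *: x + (1 - a) *: y)%R <= a%:E * g x + (1 - a)%:E * g y)%E.

Section UCDC.
Context {R : realType} {n : nat} {Ni : 'I_n -> nat}.
Local Notation N := (\sum_(i < n) Ni i)%N.
Variables (U : 'M[R]_N) (B : forall i, 'M[R]_(Ni i)) (f : 'cV[R]_N -> R)
  (L : 'I_n -> R) (Psi : forall i, 'cV[R]_(Ni i) -> \bar R).

Definition Ublk (i : 'I_n) : 'M[R]_(N, Ni i) := submxrow U i.
Definition xblk (x : 'cV[R]_N) (i : 'I_n) : 'cV[R]_(Ni i) := (Ublk i)^T *m x.
Definition gradblk (x : 'cV[R]_N) (i : 'I_n) : 'cV[R]_(Ni i) :=
  (Ublk i)^T *m grad f x.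

Definition Psi_full (x : 'cV[R]_N) : \bar R := (\sum_(i < n) Psi i (xblk x i))%E.
Definition F (x : 'cV[R]_N) : \bar R := ((f x)%:E + Psi_full x)%E.
Definition Fstar : \bar R := ereal_inf (range F).

Definition Lnorm2 (x : 'cV[R]_N) : R :=
  \sum_(i < n) L i * bnorm (B i) (xblk x i) ^+ 2.

Definition V (i : 'I_n) (x : 'cV[R]_N) (t : 'cV[R]_(Ni i)) : \bar R :=
  ((vdot (gradblk x i) t + L i / 2 * bnorm (B i) t ^+ 2)%:E
   + Psi i (xblk x i + t))%E.

(* T^(i)(x) = argmin_t V_i(x, t)  (chosen by classical choice) *)
Definition Tblk (x : 'cV[R]_N) (i : 'I_n) : 'cV[R]_(Ni i) :=
  xget 0 [set t | forall s, (V i x t <= V i x s)%E].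

Definition Tfull (x : 'cV[R]_N) : 'cV[R]_N := \sum_(i < n) Ublk i *m Tblk x i.

Definition H (x T : 'cV[R]_N) : \bar R :=
  ((f x + vdot (grad f x) T + 1 / 2 * Lnorm2 T)%:E + Psi_full (x + T))%E.

Definition step (x : 'cV[R]_N) (i : 'I_n) : 'cV[R]_N := x + Ublk i *m Tblk x i.

Definition iterate (x0 : 'cV[R]_N) (s : seq 'I_n) : 'cV[R]_N := foldl step x0 s.

(* Sample space for (i_0,...,i_k): (k+1)-tuples of block indices with the
   uniform distribution (= i.i.d. uniform choices).
   x_k(w) = iterate over the first k indices, x_{k+1}(w) over all k+1. *)
Definition x_at (x0 : 'cV[R]_N) (k : nat) (j : nat) (w : k.+1.-tuple 'I_n)
  : 'cV[R]_N := iterate x0 (take j w).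

(* elementary conditional expectation, given the discrete random variable X,
   of the (extended-real) random variable Y under the uniform distribution on
   the finite sample space, evaluated at the outcome w *)
Definition condE {Ω : finType} {T : eqType} (Y : Ω -> \bar R) (X : Ω -> T)
  (w : Ω) : \bar R :=
  ((\sum_(w' : Ω | X w' == X w) Y w') *
     ((#|[pred w' | X w' == X w]|%:R)^-1 : R)%:E)%E.

End UCDC.

(* Main.v *)
Set Warnings "-notation-overridden,-ambiguous-paths,-notation-incompatible-prefix,-deprecated".
Require Import Defs.
From HB Require Import structures.
From mathcomp Require Import all_boot all_order all_algebra.
From mathcomp Require Import all_classical all_reals.
From mathcomp Require Import ereal topology normedtype derive.
From mathcomp Require Import fingroup perm.
From mathcomp Require Import ring lra.
Import Order.TTheory GRing.Theory Num.Theory.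
Import numFieldNormedType.Exports.
Local Open Scope ring_scope.
Set Implicit Arguments. Unset Strict Implicit.
Section Blocks.
Variables (R : realType) (n : nat) (Ni : 'I_n -> nat).
Local Notation N := (\sum_(i < n) Ni i)%N.
Variable U : 'M[R]_N.
Hypothesis hU : is_perm_mx U.

Lemma UtU : U^T *m U = 1%:M.
Proof.
move: hU => /existsP [s /eqP ->].
by rewrite tr_perm_mx -perm_mxM mulVg perm_mx1.
Qed.

Lemma blk_entry (i j : 'I_n) a b :
  ((Ublk U j)^T *m Ublk U i) a b = ((tagnat.Rank j a == tagnat.Rank i b)%:R : R).
Proof.
have := congr1 (fun M : 'M[R]_N => M (tagnat.Rank j a) (tagnat.Rank i b)) UtU.
rewrite !mxE => <-; apply: eq_bigr => r _.
by rewrite /Ublk /submxrow !mxE.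
Qed.

Lemma blk_same (i : 'I_n) (t : 'cV[R]_(Ni i)) : (Ublk U i)^T *m (Ublk U i *m t) = t.
Proof.
rewrite mulmxA; apply/matrixP => a b; rewrite mxE (bigD1 a) //= blk_entry eqxx mul1r.
rewrite [X in _ + X]big1 ?addr0 // => c ca; rewrite blk_entry.
suff -> : (tagnat.Rank i a == tagnat.Rank i c) = false by rewrite mul0r.
by apply/negbTE; rewrite -val_eqE /= tagnat.eq_Rank eqxx /= val_eqE eq_sym.
Qed.

Lemma blk_diff (i j : 'I_n) (t : 'cV[R]_(Ni i)) : i != j ->
  (Ublk U j)^T *m (Ublk U i *m t) = 0.
Proof.
move=> ij; rewrite mulmxA; apply/matrixP => a b; rewrite !mxE.
apply: big1 => c _; rewrite blk_entry.
suff -> : (tagnat.Rank j a == tagnat.Rank i c) = false by rewrite mul0r.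
by apply/negbTE; rewrite -val_eqE /= tagnat.eq_Rank eq_sym (negbTE ij).
Qed.
End Blocks.
Section Vdot.
Variable R : realType.

Lemma vdotE m (a b : 'cV[R]_m) : vdot a b = \sum_k a k 0 * b k 0.
Proof. by rewrite /vdot mxE; apply: eq_bigr => k _; rewrite mxE. Qed.

Lemma vdotC m (a b : 'cV[R]_m) : vdot a b = vdot b a.
Proof. by rewrite !vdotE; apply: eq_bigr => k _; rewrite mulrC. Qed.

Lemma vdotDl m (a b c : 'cV[R]_m) : vdot (a + b) c = vdot a c + vdot b c.
Proof. by rewrite !vdotE -big_split; apply: eq_bigr => k _; rewrite mxE mulrDl. Qed.

Lemma vdotZl m (s : R) (a c : 'cV[R]_m) : vdot (s *: a) c = s * vdot a c.
Proof. by rewrite !vdotE mulr_sumr; apply: eq_bigr => k _; rewrite mxE mulrA. Qed.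

Lemma vdotDr m (a b c : 'cV[R]_m) : vdot c (a + b) = vdot c a + vdot c b.
Proof. by rewrite !(vdotC c) vdotDl. Qed.

Lemma vdotZr m (s : R) (a c : 'cV[R]_m) : vdot c (s *: a) = s * vdot c a.
Proof. by rewrite !(vdotC c) vdotZl. Qed.

Lemma vdotNl m (a c : 'cV[R]_m) : vdot (- a) c = - vdot a c.
Proof. by rewrite -scaleN1r vdotZl mulN1r. Qed.

Lemma vdotBl m (a b c : 'cV[R]_m) : vdot (a - b) c = vdot a c - vdot b c.
Proof. by rewrite vdotDl vdotNl. Qed.

Lemma vdotBr m (a b c : 'cV[R]_m) : vdot c (a - b) = vdot c a - vdot c b.
Proof. by rewrite !(vdotC c) vdotBl. Qed.

Lemma vdot0r m (a : 'cV[R]_m) : vdot a 0 = 0.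
Proof. by rewrite vdotE big1 // => k _; rewrite mxE mulr0. Qed.

Lemma vdot_mulmx m p (M : 'M[R]_(m, p)) a b : vdot a (M *m b) = vdot (M^T *m a) b.
Proof. by rewrite /vdot mulmxA trmx_mul trmxK. Qed.

Lemma vdot_sumr m (I : finType) (c : 'cV[R]_m) (F : I -> 'cV[R]_m) :
  vdot c (\sum_i F i) = \sum_i vdot c (F i).
Proof.
rewrite vdotE; under eq_bigr do rewrite summxE mulr_sumr.
rewrite exchange_big /=; apply: eq_bigr => i _; by rewrite vdotE.
Qed.

Lemma posdef_ge0 m (B : 'M[R]_m) t : posdef B -> 0 <= vdot (B *m t) t.
Proof.
case=> _ hB; have [->|t0] := eqVneq t 0; first by rewrite vdot0r.
exact/ltW/hB.
Qed.

Lemma posdef_eq0 m (B : 'M[R]_m) t : posdef B -> vdot (B *m t) t = 0 -> t = 0.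
Proof.
case=> _ hB h; apply/eqP; apply: contraLR (lexx (0:R)) => /hB.
by rewrite h ltxx.
Qed.

Lemma posdef_sym m (B : 'M[R]_m) u v : posdef B -> vdot (B *m u) v = vdot (B *m v) u.
Proof. by case=> hT _; rewrite vdotC vdot_mulmx hT. Qed.

Lemma posdef_unit m (B : 'M[R]_m) : posdef B -> B \in unitmx.
Proof.
move=> hB; rewrite -row_free_unit; apply: inj_row_free => v hv.
have hB' := hB; case: hB' => hT _.
suff : v^T = 0 by move/(congr1 trmx); rewrite trmxK trmx0.
apply: (posdef_eq0 hB).
have -> : B *m v^T = 0 by rewrite -hT -trmx_mul hv trmx0.
by rewrite vdotC vdot0r.
Qed.

Lemma CS_posdef m (B : 'M[R]_m) u t : posdef B ->
  vdot (B *m u) t <= Num.sqrt (vdot (B *m u) u) * Num.sqrt (vdot (B *m t) t).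
Proof.
move=> hB.
set qu := vdot (B *m u) u; set qt := vdot (B *m t) t; set b := vdot (B *m u) t.
have qu0 : 0 <= qu by exact: posdef_ge0.
have qt0 : 0 <= qt by exact: posdef_ge0.
set a := Num.sqrt qt; set c := Num.sqrt qu.
have h := posdef_ge0 (a *: u - c *: t) hB.
rewrite mulmxBr -!scalemxAr vdotBl !vdotBr !vdotZl !vdotZr in h.
rewrite (posdef_sym u t hB) -/qu -/qt -/b in h.
have ea : a ^+ 2 = qt by rewrite sqr_sqrtr.
have ec : c ^+ 2 = qu by rewrite sqr_sqrtr.
have a0 : 0 <= a by exact: sqrtr_ge0.
have c0 : 0 <= c by exact: sqrtr_ge0.
have [a_eq0|a_gt0] := eqVneq a 0.
  have : qt = 0 by rewrite -ea a_eq0 expr0n.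
  move/(posdef_eq0 hB) => t0; rewrite /b t0 vdot0r; exact: mulr_ge0.
have [c_eq0|c_gt0] := eqVneq c 0.
  have : qu = 0 by rewrite -ec c_eq0 expr0n.
  move/(posdef_eq0 hB) => u0; rewrite /b u0 mulmx0 vdotC vdot0r; exact: mulr_ge0.
have hac : 0 < a * c by rewrite mulr_gt0 // lt0r ?a_gt0 ?c_gt0.
rewrite (posdef_sym t u hB) -/b in h.
nra.
Qed.
End Vdot.
Section Deriv.
Variable R : realType.

Lemma dual_CS m (B : 'M[R]_m) g t : posdef B ->
  vdot g t <= bdnorm B g * bnorm B t.
Proof.
move=> hB; have hU := posdef_unit hB.
rewrite /bdnorm /bnorm; set u := invmx B *m g.
have -> : g = B *m u by rewrite /u mulKVmx.
rewrite (vdotC u); exact: CS_posdef.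
Qed.

Lemma bnormZ m (B : 'M[R]_m) (s : R) t : bnorm B (s *: t) = `|s| * bnorm B t.
Proof.
rewrite /bnorm -scalemxAr vdotZl vdotZr mulrA -expr2 sqrtrM ?sqr_ge0 //.
by rewrite sqrtr_sqr.
Qed.

Lemma grad_vdot m (f : 'cV[R]_m -> R) y d : differentiable f y ->
  vdot (grad f y) d = 'D_d f y.
Proof.
move=> df; rewrite deriveE //.
rewrite {2}(matrix_sum_delta d) linear_sum vdotE /=; apply: eq_bigr => j _.
rewrite big_ord1 linearZ /= -deriveE // /grad mxE mulrC.
by rewrite [in RHS](ord1 (0 : 'I_1)). 
Qed.
End Deriv.
Section Descent.
Variables (R : realType) (m : nat) (f : 'cV[R]_m -> R).
Hypothesis hfdiff : forall x, differentiable f x.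

Lemma line_derive (x d : 'cV[R]_m) (s : R) :
  is_derive s 1 (fun r : R => f (x + r *: d)) ('D_d f (x + s *: d)).
Proof.
have e : (fun h : R => h^-1 *: (((fun r : R => f (x + r *: d)) \o shift s) (h *: 1)
                        - f (x + s *: d)))
       = (fun h : R => h^-1 *: ((f \o shift (x + s *: d)) (h *: d) - f (x + s *: d))).
  apply: funext => h /=; congr (_ *: (f _ - _)).
  by rewrite scaler1 scalerDl addrCA.
split.
  rewrite /derivable e; exact: (@diff_derivable _ _ _ f (x + s *: d) d (hfdiff _)).
by rewrite /derive e.
Qed.
End Descent.
Section Descent2.
Variables (R : realType) (n : nat) (Ni : 'I_n -> nat).
Local Notation N := (\sum_(i < n) Ni i)%N.
Variables (U : 'M[R]_N) (B : forall i : 'I_n, 'M[R]_(Ni i)) (f : 'cV[R]_N -> R)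
  (L : 'I_n -> R).
Hypothesis hB : forall i, posdef (B i).
Hypothesis hfdiff : forall x, differentiable f x.
Hypothesis hL : forall i, 0 < L i.
Hypothesis hLip : forall (x : 'cV[R]_N) (i : 'I_n) (t : 'cV[R]_(Ni i)),
     bdnorm (B i) (gradblk U f (x + Ublk U i *m t) i - gradblk U f x i)
       <= L i * bnorm (B i) t.

Lemma bnorm_ge0 m (M : 'M[R]_m) t : 0 <= bnorm M t.
Proof. exact: sqrtr_ge0. Qed.

Lemma descent x i t :
  f (x + Ublk U i *m t) <= f x + vdot (gradblk U f x i) t + L i / 2 * bnorm (B i) t ^+ 2.
Proof.
set d := Ublk U i *m t; set c0 := vdot (gradblk U f x i) t.
set K := L i / 2 * bnorm (B i) t ^+ 2.
pose phi := fun r : R => f (x + r *: d).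
pose psi := phi - c0 \*: (@idfun R) - K \*: ((@idfun R) ^+ 2).
have dpsi : forall r : R, is_derive r (1:R) (psi : R -> R) ('D_d f (x + r *: d) - c0 - K * (2 * r)).
  move=> r; apply: is_derive_eq.
  apply: is_deriveB; first apply: is_deriveB; first exact: line_derive.
  rewrite /= expr1; congr (_ - _ - _); rewrite /GRing.scale /= ?mulr1 //.
have cont : {within `[0, 1], continuous psi}%classic.
  apply: derivable_within_continuous => r _; exact: ex_derive.
have [c hc e] := MVT ltr01 (fun r _ => dpsi r) cont.
have p1 : psi 1 = f (x + d) - c0 - K.
  by rewrite /psi /phi !fctE /= scale1r; rewrite /GRing.scale /= ?mulr1 expr1n mulr1.
have p0 : psi 0 = f x.
  by rewrite /psi /phi !fctE /= scale0r addr0; rewrite /GRing.scale /= ?mulr0 expr0n /= mulr0 !subr0.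
have c0le : 0 <= c by move: hc; rewrite in_itv /= => /andP [/ltW].
have hD : 'D_d f (x + c *: d) - c0 - K * (2 * c) <= 0.
  rewrite -grad_vdot // /d vdot_mulmx -/(gradblk U f _ i) scalemxAr.
  rewrite /c0 -vdotBl.
  have h1 := dual_CS (gradblk U f (x + Ublk U i *m (c *: t)) i - gradblk U f x i) t (hB i).
  have h2 := @hLip x i (c *: t).
  rewrite bnormZ ger0_norm // in h2.
  have bt0 := bnorm_ge0 (B i) t.
  have hd0 : 0 <= bdnorm (B i) (gradblk U f (x + Ublk U i *m (c *: t)) i - gradblk U f x i).
    exact: sqrtr_ge0.
  rewrite /K; nra.
rewrite p1 p0 subr0 mulr1 in e; lra.
Qed.
End Descent2.
Section Cond.
Variables (R : realType) (n : nat) (Ni : 'I_n -> nat).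
Local Notation N := (\sum_(i < n) Ni i)%N.
Variables (U : 'M[R]_N) (B : forall i : 'I_n, 'M[R]_(Ni i)) (f : 'cV[R]_N -> R)
  (L : 'I_n -> R) (Psi : forall i : 'I_n, 'cV[R]_(Ni i) -> \bar R).

Definition tjoin k (pi : k.-tuple 'I_n * 'I_n) : k.+1.-tuple 'I_n :=
  [tuple of rcons pi.1 pi.2].
Definition tsplit k (w : k.+1.-tuple 'I_n) : k.-tuple 'I_n * 'I_n :=
  ([tuple of belast (thead w) (behead w)], last (thead w) (behead w)).

Lemma tsplitK k : cancel (@tsplit k) (@tjoin k).
Proof.
move=> w; rewrite /tsplit /tjoin; apply: val_inj => /=.
by rewrite -lastI [in RHS](tuple_eta w).
Qed.

Lemma tjoin_bij k : bijective (@tjoin k).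
Proof.
exists (@tsplit k); last exact: tsplitK.
  case=> p i; rewrite /tsplit /tjoin.
  have e : thead [tuple of rcons p i] :: behead [tuple of rcons p i] = rcons p i.
    by have := congr1 val (tuple_eta [tuple of rcons p i]) => /= <-.
  rewrite lastI in e; case/rcons_inj: e => e1 e2.
  by congr pair => //; apply: val_inj.
Qed.

Local Notation xat := (x_at U B f L Psi).
Local Notation iter := (iterate U B f L Psi).
Local Notation stp := (step U B f L Psi).

Lemma x_at_join x0 k p i : xat x0 k k (tjoin (p, i)) = iter x0 p.
Proof. by rewrite /x_at /tjoin /= -cats1 take_size_cat // size_tuple. Qed.

Lemma x_at1_join x0 k p i : xat x0 k k.+1 (tjoin (p, i)) = stp (iter x0 p) i.
Proof.
rewrite /x_at /tjoin /= take_oversize ?size_rcons ?size_tuple //.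
by rewrite /iterate foldl_rcons.
Qed.

Lemma condE_eq x0 k (w : k.+1.-tuple 'I_n) (G : 'cV[R]_N -> \bar R) :
  condE (fun w' => G (xat x0 k k.+1 w')) (xat x0 k k) w =
  (((n%:R)^-1 : R)%:E * \sum_i G (stp (xat x0 k k w) i))%E.
Proof.
rewrite /condE.
set c := xat x0 k k w.
set S := (\sum_i G (stp c i))%E.
set m := #|[pred p : k.-tuple 'I_n | iter x0 p == c]|.
have hsum : (\sum_(w' | xat x0 k k w' == c) G (xat x0 k k.+1 w'))%E = (S *+ m)%E.
  rewrite (reindex (@tjoin k)); last exact/onW_bij/tjoin_bij.
  under eq_bigl do rewrite x_at_join.
  under eq_bigr do rewrite x_at1_join.
  rewrite (eq_bigl (fun p : k.-tuple 'I_n * 'I_n => (iter x0 p.1 == c) && true)) => [|p]; last by rewrite andbT.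
  rewrite -(pair_big_dep (fun p : k.-tuple 'I_n => iter x0 p == c) (fun _ (_ : 'I_n) => true) (fun (p : k.-tuple 'I_n) (j : 'I_n) => G (stp (iter x0 p) j))) /=.
  rewrite (eq_bigr (fun _ => S)); last by move=> p /eqP ->.
  by rewrite sumr_const.
have hcard : #|[pred w' | xat x0 k k w' == c]| = (m * n)%N.
  rewrite -sum1_card (reindex (@tjoin k)); last exact/onW_bij/tjoin_bij.
  rewrite (eq_bigl (fun p : k.-tuple 'I_n * 'I_n => (iter x0 p.1 == c) && true)) => [|p]; last first.
    by rewrite !inE andbT; case: p => p i; rewrite (@x_at_join x0 k p i).
  rewrite -(pair_big_dep (fun p : k.-tuple 'I_n => iter x0 p == c) (fun _ (_ : 'I_n) => true) (fun (_ : k.-tuple 'I_n) (_ : 'I_n) => 1%N)) /=.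
  rewrite (eq_bigr (fun _ => n)); last by move=> p _; rewrite sum1_card card_ord.
  by rewrite sum_nat_const.
have m0 : (0 < m)%N.
  apply/card_gt0P; exists (tsplit w).1; rewrite inE /=.
  apply/eqP; have := @x_at_join x0 k (tsplit w).1 (tsplit w).2.
  by rewrite -surjective_pairing tsplitK.
have n0 : (0 < n)%N by case: n Ni U B L Psi w {G c S hsum hcard m m0} => [|//] ? ? ? ? ? [[|[[]]]].
rewrite hsum hcard -mule_natr -muleA -EFinM muleC; congr (_ * _)%E; congr (_%:E).
rewrite natrM invfM mulrA mulfV ?mul1r //.
by rewrite pnatr_eq0 -lt0n.
Qed.
End Cond.
Section EHelp.
Variable R : realType.
Local Open Scope ereal_scope.
Lemma gtNy_add (a b : \bar R) : -oo < a -> -oo < b -> -oo < a + b.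
Proof. by move: a b => [a| |] [b| |] //= _ _; rewrite -EFinD ltNyr. Qed.

Lemma gtNy_sum (I : Type) (r : seq I) (P : pred I) (F : I -> \bar R) :
  (forall i, P i -> -oo < F i) -> -oo < \sum_(i <- r | P i) F i.
Proof. move=> h; apply: (big_ind (fun x : \bar R => -oo < x)) => //; exact: gtNy_add. Qed.

Lemma gtNy_natmul (a : \bar R) m : -oo < a -> -oo < a *+ m.
Proof. move=> h; elim: m => [|m ih]; first by rewrite -mule_natl mul0e ltNy0.
by rewrite muleS; exact: gtNy_add. Qed.
End EHelp.

Unset Implicit Arguments.
Section Blocks2.
Variables (R : realType) (n : nat) (Ni : 'I_n -> nat).
Local Notation N := (\sum_(i < n) Ni i)%N.
Variables (U : 'M[R]_N) (B : forall i : 'I_n, 'M[R]_(Ni i)) (f : 'cV[R]_N -> R)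
  (L : 'I_n -> R) (Psi : forall i : 'I_n, 'cV[R]_(Ni i) -> \bar R).
Hypothesis hU : is_perm_mx U.
Hypothesis hB : forall i, posdef (B i).
Hypothesis hfdiff : forall x, differentiable f x.
Hypothesis hL : forall i, 0 < L i.
Hypothesis hLip : forall (x : 'cV[R]_N) (i : 'I_n) (t : 'cV[R]_(Ni i)),
     bdnorm (B i) (gradblk U f (x + Ublk U i *m t) i - gradblk U f x i)
       <= L i * bnorm (B i) t.

Local Notation T := (Tblk U B f L Psi).

Lemma xblk_add x y i : xblk U (x + y) i = xblk U x i + xblk U y i.
Proof. by rewrite /xblk mulmxDr. Qed.

Lemma xblk_same x i t : xblk U (x + Ublk U i *m t) i = xblk U x i + t.
Proof. by rewrite xblk_add /xblk (blk_same hU). Qed.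

Lemma xblk_diff x i j t : i != j -> xblk U (x + Ublk U i *m t) j = xblk U x j.
Proof. by move=> ij; rewrite xblk_add /xblk (blk_diff hU) // addr0. Qed.

Lemma xblk_Tfull x j : xblk U (Tfull U B f L Psi x) j = T x j.
Proof.
rewrite /xblk /Tfull mulmx_sumr (bigD1 j) //= (blk_same hU) //.
by rewrite [X in _ + X]big1 ?addr0 // => i ij; rewrite (blk_diff hU).
Qed.

Lemma Psi_step x i t :
  Psi_full U Psi (x + Ublk U i *m t) =
  (Psi i (xblk U x i + t) + \sum_(j | j != i) Psi j (xblk U x j))%E.
Proof.
rewrite /Psi_full (bigD1 i) //= xblk_same; congr (_ + _)%E.
by apply: eq_bigr => j ji; rewrite xblk_diff // eq_sym.
Qed.

Lemma F_step_le x i :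
  (F U f Psi (step U B f L Psi x i) <=
   (f x)%:E + V U B f L Psi i x (T x i) + \sum_(j | j != i) Psi j (xblk U x j))%E.
Proof.
rewrite /F /step Psi_step /V addeA; apply: leeD2r.
rewrite addeA; apply: leeD2r; rewrite -EFinD lee_fin addrA.
exact: (descent hB hfdiff hLip).
Qed.

Lemma H_decomp x :
  H U B f L Psi x (Tfull U B f L Psi x) = ((f x)%:E + \sum_i V U B f L Psi i x (T x i))%E.
Proof.
rewrite /H /V big_split /= sumEFin addeA -EFinD; congr (_ + _)%E.
  congr (_%:E); rewrite -addrA big_split /=; congr (_ + _).
  congr (_ + _).
    rewrite /Tfull vdot_sumr; apply: eq_bigr => i _; rewrite vdot_mulmx //.
  rewrite /Lnorm2 mulr_sumr; apply: eq_bigr => i _; rewrite xblk_Tfull; lra.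
rewrite /Psi_full; apply: eq_bigr => i _; by rewrite xblk_add xblk_Tfull.
Qed.
End Blocks2.
Lemma alg_identity (Z : nmodType) (n : nat) (a : Z) (Vv P : 'I_n -> Z) : (0 < n)%N ->
  \sum_i (a + Vv i + \sum_(j | j != i) P j) = (a + \sum_i Vv i) + (a + \sum_i P i) *+ n.-1.
Proof.
move=> n0.
rewrite !big_split /= sumr_const card_ord.
rewrite (exchange_big_dep xpredT) //=.
rewrite [X in _ + _ + X](eq_bigr (fun j => P j *+ n.-1)); last first.
  move=> j _; rewrite (eq_bigl (fun i => i \in predC1 j)); last by move=> i; rewrite !inE eq_sym.
  by rewrite sumr_const cardC1 card_ord.
rewrite sumrMnl mulrnDl.
case: n n0 a Vv P => // m _ a Vv P /=.
rewrite mulrS.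
rewrite -!addrA; congr (_ + _); rewrite addrCA; congr (_ + _).
Qed.
Section Final.
Variables (R : realType) (n : nat) (Ni : 'I_n -> nat).
Local Notation N := (\sum_(i < n) Ni i)%N.
Variables (U : 'M[R]_N) (B : forall i : 'I_n, 'M[R]_(Ni i)) (f : 'cV[R]_N -> R)
  (L : 'I_n -> R) (Psi : forall i : 'I_n, 'cV[R]_(Ni i) -> \bar R).
Hypothesis hU : is_perm_mx U.
Hypothesis hB : forall i, posdef (B i).
Hypothesis hfdiff : forall x, differentiable f x.
Hypothesis hL : forall i, 0 < L i.
Hypothesis hLip : forall (x : 'cV[R]_N) (i : 'I_n) (t : 'cV[R]_(Ni i)),
     bdnorm (B i) (gradblk U f (x + Ublk U i *m t) i - gradblk U f x i)
       <= L i * bnorm (B i) t.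
Hypothesis hPsi : forall i, [/\ proper_efun (Psi i), closed_efun (Psi i)
                      & convex_efun (Psi i)].
Hypothesis hmin : exists xs, forall x, (F U f Psi xs <= F U f Psi x)%E.

Lemma Psi_gtNy i t : (-oo < Psi i t)%E.
Proof. by case: (hPsi i) => -[h _] _ _; rewrite ltNye h. Qed.

Lemma Psi_full_gtNy x : (-oo < Psi_full U Psi x)%E.
Proof. by apply: gtNy_sum => i _; exact: Psi_gtNy. Qed.

Lemma F_gtNy x : (-oo < F U f Psi x)%E.
Proof. by apply: gtNy_add; [rewrite ltNyr | exact: Psi_full_gtNy]. Qed.

Lemma Fstar_fin : exists r : R, Fstar U f Psi = r%:E.
Proof.
case: hmin => xs hxs.
have eF : Fstar U f Psi = F U f Psi xs.
  apply/eqP; rewrite eq_le; apply/andP; split.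
    by apply: ereal_inf_lbound; exists xs.
  by apply/ereal_infP => _ [y _ <-]; exact: hxs.
pose tt (i : 'I_n) := xget 0 [set t : 'cV[R]_(Ni i) | Psi i t != +oo%E].
have htt i : Psi i (tt i) != +oo%E.
  by case: (hPsi i) => -[_ h] _ _; exact: (@xgetPex _ 0 [set t : 'cV[R]_(Ni i) | Psi i t != +oo%E] h).
pose z := \sum_i Ublk U i *m tt i.
have hz : (F U f Psi z < +oo)%E.
  rewrite /F /Psi_full.
  have -> : \sum_(i < n) Psi i (xblk U z i) = \sum_(i < n) Psi i (tt i).
    apply: eq_bigr => i _; congr (Psi i _).
    by rewrite /xblk /z mulmx_sumr (bigD1 i) //= (blk_same hU) [X in _ + X]big1 ?addr0 // => j ji; rewrite (blk_diff hU).
  rewrite lte_add_pinfty ?ltry //.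
  by apply: lte_sum_pinfty => i _; rewrite ltey htt.
exists (fine (F U f Psi xs)); rewrite eF fineK // fin_numE.
rewrite -ltNye F_gtNy /= -ltey.
by apply: le_lt_trans (hxs z) hz.
Qed.

Lemma main x0 k (w : k.+1.-tuple 'I_n) :
  let xk := x_at U B f L Psi x0 k k in
  let xk1 := x_at U B f L Psi x0 k k.+1 in
  (condE (fun w' => F U f Psi (xk1 w') - Fstar U f Psi) xk w
   <= (n%:R^-1)%:E * (H U B f L Psi (xk w) (Tfull U B f L Psi (xk w))
                       - Fstar U f Psi)
      + ((n%:R - 1) / n%:R)%:E * (F U f Psi (xk w) - Fstar U f Psi))%E.
Proof.
cbv zeta.
have n0 : (0 < n)%N by case: (thead w) => j /(leq_ltn_trans (leq0n j)).
have [r er] := Fstar_fin; rewrite er.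
rewrite (condE_eq U B f L Psi x0 w (fun y => F U f Psi y - r%:E)%E).
set c := x_at U B f L Psi x0 k k w.
pose P := fun j => Psi j (xblk U c j).
pose Vv := fun i => V U B f L Psi i c (Tblk U B f L Psi c i).
pose a := ((f c)%:E - r%:E)%E.
have hle : (\sum_i (F U f Psi (step U B f L Psi c i) - r%:E)
            <= \sum_i (a + Vv i + \sum_(j | j != i) P j))%E.
  apply: lee_sum => i _.
  apply: le_trans (leeB (F_step_le R n Ni U B f L Psi hU hB hfdiff hLip c i) (lexx r%:E)) _.
  rewrite /a /Vv /P (addeAC _ _ (- r%:E)%E) (addeAC (f c)%:E).
  exact: lexx.
apply: le_trans (lee_wpmul2l _ hle) _; first by rewrite lee_fin invr_ge0.
rewrite (alg_identity _ n a Vv P n0).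
have eH : (H U B f L Psi c (Tfull U B f L Psi c) - r%:E = a + \sum_i Vv i)%E.
  by rewrite (H_decomp R n Ni U B f L Psi hU) /a addeAC.
have eF : (F U f Psi c - r%:E = a + \sum_i P i)%E.
  by rewrite /F /Psi_full /a addeAC.
rewrite eH eF.
have ga : (-oo < a)%E by rewrite /a -EFinB ltNyr.
have gV : (-oo < a + \sum_i Vv i)%E.
  apply: gtNy_add => //; apply: gtNy_sum => i _.
  by rewrite /Vv /V; apply: gtNy_add; [rewrite ltNyr | exact: Psi_gtNy].
have gP : (-oo < (a + \sum_i P i) *+ n.-1)%E.
  apply: gtNy_natmul; apply: gtNy_add => //; apply: gtNy_sum => i _; exact: Psi_gtNy.
rewrite muleDr //; last exact: ltninfty_adde_def.
apply: leeD => //.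
have enm : forall (y : \bar R) m, (y *+ m)%R = (y *+ m)%E by [].
rewrite enm -mule_natl muleA -EFinM.
rewrite (_ : n%:R^-1 * n.-1%:R = (n%:R - 1) / n%:R) //.
by rewrite mulrC -subn1 natrB.
Qed.
End Final.

Theorem lemma2 (R : realType) (n : nat) (Ni : 'I_n -> nat)
  (U : 'M[R]_(\sum_(i < n) Ni i)) (hU : is_perm_mx U)
  (B : forall i : 'I_n, 'M[R]_(Ni i)) (hB : forall i, posdef (B i))
  (f : 'cV[R]_(\sum_(i < n) Ni i) -> R) (hfconv : convex_fun f)
  (hfdiff : forall x, differentiable f x)
  (L : 'I_n -> R) (hL : forall i, 0 < L i)
  (hLip : forall (x : 'cV[R]_(\sum_(i < n) Ni i)) (i : 'I_n) (t : 'cV[R]_(Ni i)),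
     bdnorm (B i) (gradblk U f (x + Ublk U i *m t) i - gradblk U f x i)
       <= L i * bnorm (B i) t)
  (Psi : forall i : 'I_n, 'cV[R]_(Ni i) -> \bar R)
  (hPsi : forall i, [/\ proper_efun (Psi i), closed_efun (Psi i)
                      & convex_efun (Psi i)])
  (hmin : exists xs, forall x, (F U f Psi xs <= F U f Psi x)%E)
  (x0 : 'cV[R]_(\sum_(i < n) Ni i)) (k : nat) (w : k.+1.-tuple 'I_n) :
  let xk := x_at U B f L Psi x0 k k in
  let xk1 := x_at U B f L Psi x0 k k.+1 in
  (condE (fun w' => F U f Psi (xk1 w') - Fstar U f Psi) xk w
   <= (n%:R^-1)%:E * (H U B f L Psi (xk w) (Tfull U B f L Psi (xk w))
                       - Fstar U f Psi)
      + ((n%:R - 1) / n%:R)%:E * (F U f Psi (xk w) - Fstar U f Psi))%E.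
Proof. exact: (main R n Ni U B f L Psi hU hB hfdiff hLip hPsi hmin x0 k w). Qed.
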